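(* Let $\{e_n\}_{n\in\mathbb{Z}}$ be i.i.d. real random variables whose common distribution has a continuous, bounded, strictly positive density on $\mathbb{R}$. Let $q,d\ge1$ be integers and $r,\mu_1,\mu_2,\phi_1,\dots,\phi_q,\psi_1,\dots,\psi_q\in\mathbb{R}$, and let $\{y_n\}_{n\in\mathbb{Z}}$ be the unique strictly stationary solution of $$y_n=\begin{cases}\mu_1+e_n+\sum_{i=1}^q\phi_ie_{n-i}, & \text{if } y_{n-d}\le r,\\ \mu_2+e_n+\sum_{i=1}^q\psi_ie_{n-i}, & \text{if } y_{n-d}>r.\end{cases}$$ Then there exists $\rho\in(0,1)$ such that for all $u,v\in\mathbb{R}$, $$\big|\mathbb{P}(y_0\le u,\ y_k\le v)-\mathbb{P}(y_0\le u)\,\mathbb{P}(y_k\le v)\big|=O(\rho^k)\quad\text{as } k\to\infty.$$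
   Context: A solution means a process on the same probability space as $\{e_n\}$ satisfying the equation almost surely for every $n$. Under the density assumption, with $a_n=\mu_2+e_n+\sum_{i=1}^q\psi_ie_{n-i}$ and $b_n=\mu_1+e_n+\sum_{i=1}^q\phi_ie_{n-i}$, one has $\mathbb{P}(a_n\le r, b_n\le r)+\mathbb{P}(a_n>r,b_n>r)\neq0$, so a unique strictly stationary ergodic solution exists. *)

(* Defs.v *)
From HB Require Import structures.
From mathcomp Require Import all_boot all_order all_algebra.
From mathcomp Require Import all_classical all_reals all_analysis.
Set Implicit Arguments. Unset Strict Implicit. Unset Printing Implicit Defensive.
Import Order.TTheory GRing.Theory Num.Theory.
Local Open Scope classical_set_scope.
Local Open Scope ring_scope.

Section Defs.
Context {d0 : measure_display} {T : measurableType d0} {R : realType}.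
Variable P : probability T R.

Definition mutually_independent (X : int -> T -> R) : Prop :=
  forall (m : nat) (t : 'I_m -> int), injective t ->
  forall A : 'I_m -> set R, (forall i, measurable (A i)) ->
  P [set w | forall i : 'I_m, A i (X (t i) w)] =
  (\prod_(i < m) P (X (t i) @^-1` A i))%E.

(* Strict stationarity: every finite-dimensional distribution is shift
   invariant (stated on measurable rectangles, which determine the law). *)
Definition strictly_stationary (X : int -> T -> R) : Prop :=
  forall (m : nat) (t : 'I_m -> int) (h : int) (A : 'I_m -> set R),
  (forall i, measurable (A i)) ->
  P [set w | forall i : 'I_m, A i (X (t i + h) w)] =
  P [set w | forall i : 'I_m, A i (X (t i) w)].

Definition has_density (X : T -> R) (f : R -> R) : Prop :=
  forall A : set R, measurable A ->
  P (X @^-1` A) = (\int[lebesgue_measure]_(x in A) (f x)%:E)%E.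

Definition tma_rhs (e : int -> T -> R) (q d : nat) (r mu1 mu2 : R)
  (phi psi : 'I_q -> R) (y : int -> T -> R) (n : int) (w : T) : R :=
  if y (n - d%:Z) w <= r
  then mu1 + e n w + \sum_(i < q) phi i * e (n - (i.+1)%:Z) w
  else mu2 + e n w + \sum_(i < q) psi i * e (n - (i.+1)%:Z) w.

End Defs.

(* Main.v *)
Require Import Defs.
From HB Require Import structures.
From mathcomp Require Import all_boot all_order all_algebra.
From mathcomp Require Import all_classical all_reals all_analysis.
From mathcomp Require Import ring lra zify.
Import Order.TTheory GRing.Theory Num.Theory numFieldNormedType.Exports.
Local Open Scope classical_set_scope.
Local Open Scope ring_scope.


Section Indep2.
Context {d0 : measure_display} {T : measurableType d0} {R : realType}.
Variable P : probability T R.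

Lemma PE {A : set T} : measurable A -> P A = (fine (P A))%:E.
Proof. by move=> mA; rewrite fineK // fin_num_measure. Qed.

Lemma compl_step (S Y : set T) : measurable S -> measurable Y ->
  P (S `&` Y) = (P S * P Y)%E -> P (~` S `&` Y) = (P (~` S) * P Y)%E.
Proof.
move=> mS mY HS.
rewrite probability_setC //.
rewrite (_ : ~` S `&` Y = Y `\` (Y `&` S)); last first.
  by apply/seteqP; split => w /=; [move=> [nS Yw]; split => // -[]|move=> [Yw H]; split => // Sw; apply: H].
rewrite measureD //; [|exact: measurableI|by apply: le_lt_trans (probability_le1 _ mY) _; rewrite ltry].
rewrite setIA setIid.
change (P Y - P (Y `&` S) = (1 - P S) * P Y)%E.
rewrite (setIC Y S) HS.
rewrite (PE mS) (PE mY) -!EFinM -!EFinB; congr EFin; ring.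
Qed.

Lemma union_step (F : (set T)^nat) (Y : set T) :
  (forall k, measurable (F k)) -> measurable Y -> trivIset setT F ->
  (forall k, P (F k `&` Y) = (P (F k) * P Y)%E) ->
  P (\bigcup_k F k `&` Y) = (P (\bigcup_k F k) * P Y)%E.
Proof.
move=> mF mY tF HF.
rewrite setI_bigcupl !measure_bigcup //; last 2 first.
+ by move=> k _; apply: measurableI.
+ exact: trivIset_setIr.
rewrite (PE mY) muleC -nneseriesZl; last by move=> i _; apply: measure_ge0.
apply: eq_eseriesr => k _.
transitivity (P (F k) * P Y)%E; first exact: HF.
by rewrite muleC -(PE mY).
Qed.

Lemma dynkin_indep (G : set (set T)) (Y : set T) :
  G `<=` measurable -> setI_closed G -> measurable Y ->
  (forall X, G X -> P (X `&` Y) = (P X * P Y)%E) ->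
  forall X, <<s G >> X -> P (X `&` Y) = (P X * P Y)%E.
Proof.
move=> GM GI mY HG.
have sGM : <<s G >> `<=` measurable.
  exact: smallest_sub (sigma_algebra_measurable T) GM.
pose T' := g_sigma_algebraType G.
have mE : @measurable _ T' = <<s G >> by [].
move=> X HX.
refine (@dynkin_induction _ T' G (fun X : set T' => P (X `&` Y) = (P X * P Y)%E) mE GI _ _ _ _ X HX).
- by rewrite setTI probability_setT mul1e.
- exact: HG.
- by move=> S mS HS; apply: compl_step => //; apply: sGM.
- by move=> F mF tF HF; exact: (@union_step F Y (fun k => sGM _ (mF k)) mY tF HF).
Qed.

End Indep2.

Section Indep.
Context {d0 : measure_display} {T : measurableType d0} {R : realType}.
Variable P : probability T R.
Variable e : int -> T -> R.
Hypothesis me : forall n, measurable_fun setT (e n).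
Hypothesis ind : mutually_independent P e.

Definition rect (s : seq int) (A : int -> set R) : set T :=
  [set w | forall i, i \in s -> A i (e i w)].

Definition Grect (S : set int) : set (set T) :=
  [set X | exists s A, (forall i, i \in s -> S i) /\
     (forall i, measurable (A i)) /\ X = rect s A].

Definition sigE S := <<s Grect S >>.

Lemma rect_cons i s A : rect (i :: s) A = e i @^-1` A i `&` rect s A.
Proof.
apply/seteqP; split => w /=.
  by move=> H; split; [apply: H; rewrite inE eqxx| move=> j js; apply: H; rewrite inE js orbT].
by move=> [H1 H2] j; rewrite inE => /orP[/eqP->//|]; apply: H2.
Qed.

Lemma rect_meas s A : (forall i, measurable (A i)) -> measurable (rect s A).
Proof.
move=> mA; elim: s => [|i s IH].
  by rewrite (_ : rect [::] A = setT) //; apply/seteqP; split => w //= _ j.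
rewrite rect_cons; apply: measurableI => //.
by rewrite -(setTI (_ @^-1` _)); apply: me.
Qed.

Lemma rect_undup s A : rect (undup s) A = rect s A.
Proof. by apply/seteqP; split => w /= H i; [rewrite -mem_undup|rewrite mem_undup]; apply: H. Qed.

Lemma rect_prod s A : uniq s -> (forall i, measurable (A i)) ->
  P (rect s A) = (\prod_(i <- s) P (e i @^-1` A i))%E.
Proof.
move=> us mA.
have := @ind (size s) (fun j => nth 0 s j).
have inj : injective (fun j : 'I_(size s) => nth 0 s j).
  by move=> i j /eqP; rewrite nth_uniq // => /eqP/val_inj.
move=> /(_ inj (fun j => A (nth 0 s j)) (fun j => mA _)) H.
have -> : rect s A = [set w | forall j : 'I_(size s), A (nth 0 s j) (e (nth 0 s j) w)].
  apply/seteqP; split => w /= Hw.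
    by move=> j; apply: Hw; apply: mem_nth.
  move=> i is_; have := Hw (Ordinal (etrans (index_mem i s) is_)).
  by rewrite /= nth_index.
rewrite H (big_nth 0) big_mkord; apply: eq_bigr => j _ //.
Qed.


Lemma Grect_meas S : Grect S `<=` measurable.
Proof. by move=> X [s [A [_ [mA ->]]]]; apply: rect_meas. Qed.

Lemma sigE_meas S : sigE S `<=` measurable.
Proof. exact: smallest_sub (sigma_algebra_measurable T) (@Grect_meas S). Qed.

Lemma Grect_setI S : setI_closed (Grect S).
Proof.
move=> X Y [s1 [A1 [S1 [mA1 ->]]]] [s2 [A2 [S2 [mA2 ->]]]].
exists (s1 ++ s2), (fun i => (if i \in s1 then A1 i else setT) `&` (if i \in s2 then A2 i else setT)).
split; [by move=> i; rewrite mem_cat => /orP[/S1|/S2]|split].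
  by move=> i; apply: measurableI; case: ifP.
apply/seteqP; split => w /=.
  move=> [H1 H2] i; rewrite mem_cat => _; split; case: ifP => // Hi; [exact: H1|exact: H2].
move=> H; split => i Hi.
  have Hc : i \in s1 ++ s2 by rewrite mem_cat Hi.
  by have [+ _] := H i Hc; rewrite Hi.
have Hc : i \in s1 ++ s2 by rewrite mem_cat Hi orbT.
by have [_ +] := H i Hc; rewrite Hi.
Qed.

Lemma Grect_setT S : Grect S setT.
Proof.
exists [::], (fun _ => setT); split => //; split => // ; apply/seteqP; split => w //.
Qed.

Lemma Grect_pre S i A : S i -> measurable A -> Grect S (e i @^-1` A).
Proof.
move=> Si mA; exists [:: i], (fun _ => A); split; first by move=> j; rewrite inE => /eqP->.
split => //; apply/seteqP; split => w /=; first by move=> H j; rewrite inE => /eqP->.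
by move=> H; apply: H; rewrite inE.
Qed.

Lemma sigT S : sigE S setT.
Proof. by apply: sub_sigma_algebra; apply: Grect_setT. Qed.
Lemma sigC S A : sigE S A -> sigE S (~` A).
Proof. exact: sigma_algebraC. Qed.
Lemma sigI S A B : sigE S A -> sigE S B -> sigE S (A `&` B).
Proof. exact: (@measurableI _ (g_sigma_algebraType (Grect S)) A B). Qed.
Lemma sigU S A B : sigE S A -> sigE S B -> sigE S (A `|` B).
Proof. exact: (@measurableU _ (g_sigma_algebraType (Grect S)) A B). Qed.

Lemma sig_mono S S' : S `<=` S' -> sigE S `<=` sigE S'.
Proof.
move=> SS'; apply: smallest_sub; first exact: smallest_sigma_algebra.
move=> X [s [A [Hs [mA ->]]]]; apply: sub_sigma_algebra.
by exists s, A; split => // i /Hs /SS'.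
Qed.

Lemma indep_rect S1 S2 X Y : (forall i, S1 i -> ~ S2 i) ->
  Grect S1 X -> Grect S2 Y -> P (X `&` Y) = (P X * P Y)%E.
Proof.
move=> dis [s1 [A1 [H1 [mA1 ->]]]] [s2 [A2 [H2 [mA2 ->]]]].
rewrite -(rect_undup s1) -(rect_undup s2).
set u1 := undup s1; set u2 := undup s2.
pose A i := if i \in u1 then A1 i else A2 i.
have mA i : measurable (A i) by rewrite /A; case: ifP.
have dj i : i \in u1 -> i \notin u2.
  rewrite !mem_undup => /H1 h1; apply/negP => /H2 h2; exact: dis h1 h2.
have -> : rect u1 A1 `&` rect u2 A2 = rect (u1 ++ u2) A.
  apply/seteqP; split => w /=.
    move=> [Hx Hy] i; rewrite mem_cat /A => /orP[Hi|Hi]; first by rewrite Hi; exact: Hx.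
    by case: ifP => [/dj|]; [rewrite Hi|move=> _; exact: Hy].
  move=> H; split => i Hi; have := H i; rewrite mem_cat Hi ?orbT /A /= => /(_ isT).
    by rewrite Hi.
  by case: ifP => // /dj; rewrite Hi.
have u12 : uniq (u1 ++ u2).
  rewrite cat_uniq !undup_uniq /= andbT; apply/hasPn => i /= Hi.
  by apply/negP => /dj; rewrite Hi.
rewrite !rect_prod ?undup_uniq // big_cat /=; congr (_ * _)%E; apply: eq_big_seq => i Hi; rewrite /A.
  by rewrite Hi.
by case: ifP => // /dj; rewrite Hi.
Qed.

Lemma indep_sig S1 S2 X Y : (forall i, S1 i -> ~ S2 i) ->
  sigE S1 X -> sigE S2 Y -> P (X `&` Y) = (P X * P Y)%E.
Proof.
move=> dis sX sY.
have mY := @sigE_meas _ _ sY.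
apply: (dynkin_indep P (Grect S1) Y (@Grect_meas S1) (@Grect_setI S1) mY) => // X' gX'.
rewrite setIC muleC.
apply: (dynkin_indep P (Grect S2) X' (@Grect_meas S2) (@Grect_setI S2) (@Grect_meas _ _ gX')) => // Y' gY'.
by rewrite setIC muleC; apply: indep_rect gX' gY'.
Qed.


Lemma e_meas_sig S i : S i ->
  measurable_fun setT (e i : g_sigma_algebraType (Grect S) -> R).
Proof.
move=> Si _ B mB; rewrite setTI; apply: sub_sigma_algebra; exact: Grect_pre.
Qed.

Lemma sig_le S (g : T -> R) c :
  measurable_fun setT (g : g_sigma_algebraType (Grect S) -> R) ->
  sigE S [set w | g w <= c].
Proof.
move=> mg; have := mg measurableT _ (measurable_itv `]-oo, c]).
rewrite setTI (_ : g @^-1` _ = [set w | g w <= c]) //.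
Qed.

Definition lin (q : nat) (mu : R) (phi : 'I_q -> R) (t : int) (w : T) : R :=
  mu + e t w + \sum_(i < q) phi i * e (t - (i.+1)%:Z) w.

Lemma lin_meas S (q : nat) (mu : R) (phi : 'I_q -> R) (t : int) : S t -> (forall i : 'I_q, S (t - (i.+1)%:Z)) ->
  measurable_fun setT (lin q mu phi t : g_sigma_algebraType (Grect S) -> R).
Proof.
move=> St Si; rewrite /lin.
apply: measurable_realfun.measurable_funD; first apply: measurable_realfun.measurable_funD.
- exact: measurable_cst.
- exact: e_meas_sig.
- apply: measurable_sum => i; apply: measurable_realfun.measurable_funM; first exact: measurable_cst.
  exact: e_meas_sig.
Qed.

End Indep.




Lemma int_pos {R : realType} (f : R -> R) (a b : R) : a < b -> continuous f ->
  (forall x, 0 < f x) -> (0 < \int[lebesgue_measure]_(x in `[a, b]) (f x)%:E)%E.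
Proof.
move=> ab fc fp.
have [c cab Hc] := EVT_min (ltW ab) (continuous_subspaceT fc).
apply: (@lt_le_trans _ _ (\int[lebesgue_measure]_(x in `[a, b]) cst (f c)%:E x)%E).
  rewrite integral_cst //; apply: mule_gt0; first by rewrite lte_fin.
  have := lebesgue_measure_itv `[a, b]; rewrite /= lte_fin ab => H.
  by rewrite [X in (_ < X)%E]H lte_fin subr_gt0.
apply: ge0_le_integral => //.
- by move=> x _; rewrite lee_fin; apply: ltW.
- apply/measurable_realfun.measurable_EFinP; apply: measurable_funS (measurable_realfun.continuous_measurable_fun fc) => //.
Qed.


Section Coupling.
Context {d0 : measure_display} {T : measurableType d0} {R : realType}.
Variable e : int -> T -> R.
Variables (q dd : nat) (r mu1 mu2 : R) (phi psi : 'I_q -> R) (y : int -> T -> R).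

Fixpoint Gb (t : int) (L : nat) (w : T) : bool :=
  if L is L'.+1 then
    (if Gb (t - dd%:Z) L' w then lin e q mu1 phi t w else lin e q mu2 psi t w) <= r
  else true.

Definition yh (t : int) (L : nat) (w : T) : R :=
  if Gb (t - dd%:Z) L w then lin e q mu1 phi t w else lin e q mu2 psi t w.

Definition Good (t : int) (w : T) := lin e q mu1 phi t w <= r /\ lin e q mu2 psi t w <= r.

Lemma tma_rhsE n w : tma_rhs e dd r mu1 mu2 phi psi y n w =
  if y (n - dd%:Z) w <= r then lin e q mu1 phi n w else lin e q mu2 psi n w.
Proof. by []. Qed.

Lemma couple w : (forall n, y n w = tma_rhs e dd r mu1 mu2 phi psi y n w) ->
  forall L t, (exists2 j, (j <= L)%N & Good (t - (j * dd)%:Z) w) ->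
  Gb t L w = (y t w <= r).
Proof.
move=> Heq; elim=> [|L IH] t [j jL Hj].
  move: jL; rewrite leqn0 => /eqP jE; move: Hj; rewrite jE mul0n subr0 => -[H1 H2].
  by rewrite /= Heq tma_rhsE; case: ifP.
case: j => [|j] in jL Hj *.
  move: Hj; rewrite mul0n subr0 => -[H1 H2].
  by rewrite /= Heq tma_rhsE; case: ifP => _; case: ifP => _; rewrite ?H1 ?H2.
rewrite /= (IH (t - dd%:Z)); last first.
  exists j => //; move: Hj; congr Good; lia.
by rewrite [y t w]Heq tma_rhsE.
Qed.

Lemma yh_eq w L t : (forall n, y n w = tma_rhs e dd r mu1 mu2 phi psi y n w) ->
  (exists2 j, (j <= L)%N & Good (t - dd%:Z - (j * dd)%:Z) w) ->
  yh t L w = y t w.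
Proof.
move=> Heq H; rewrite /yh (@couple w Heq L (t - dd%:Z) H) [y t w]Heq tma_rhsE //.
Qed.

Lemma lin_sig S mu (ph : 'I_q -> R) t c : (forall x, t - q%:Z <= x <= t -> S x) ->
  (forall n, measurable_fun setT (e n)) ->
  sigE e S [set w | lin e q mu ph t w <= c].
Proof.
move=> HS me; apply: sig_le; apply: lin_meas.
- by apply: HS; lia.
- by move=> i; apply: HS; have := ltn_ord i; lia.
Qed.

Lemma Gb_sig (me : forall n, measurable_fun setT (e n)) L : forall t S,
  (forall x, t - (L * dd + q)%:Z <= x <= t -> S x) ->
  sigE e S [set w | Gb t L w].
Proof.
elim: L => [|L IH] t S HS.
  by rewrite (_ : [set w | Gb t 0 w] = setT); [apply: sigT|apply/seteqP; split].
have HG : sigE e S [set w | Gb (t - dd%:Z) L w].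
  by apply: IH => x Hx; apply: HS; lia.
have -> : [set w | Gb t L.+1 w] =
   ([set w | Gb (t - dd%:Z) L w] `&` [set w | lin e q mu1 phi t w <= r]) `|`
   (~` [set w | Gb (t - dd%:Z) L w] `&` [set w | lin e q mu2 psi t w <= r]).
  apply/seteqP; split => w /=.
    by case: (Gb _ _ w) => H; [left|right].
  by move=> [[G1 H]|[G1 H]]; [rewrite G1|move/negP/negbTE: G1 => ->].
apply: sigU; apply: sigI => //; try apply: sigC => //;
  by apply: lin_sig => // x Hx; apply: HS; lia.
Qed.

Lemma yh_sig (me : forall n, measurable_fun setT (e n)) L t S c :
  (forall x, t - (L.+1 * dd + q)%:Z <= x <= t -> S x) ->
  sigE e S [set w | yh t L w <= c].
Proof.
move=> HS.
have HG : sigE e S [set w | Gb (t - dd%:Z) L w].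
  by apply: Gb_sig => // x Hx; apply: HS; lia.
have -> : [set w | yh t L w <= c] =
   ([set w | Gb (t - dd%:Z) L w] `&` [set w | lin e q mu1 phi t w <= c]) `|`
   (~` [set w | Gb (t - dd%:Z) L w] `&` [set w | lin e q mu2 psi t w <= c]).
  apply/seteqP; split => w /=; rewrite /yh.
    by case: (Gb _ _ w) => H; [left|right].
  by move=> [[G1 H]|[G1 H]]; [rewrite G1|move/negP/negbTE: G1 => ->].
apply: sigU; apply: sigI => //; try apply: sigC => //;
  by apply: lin_sig => // x Hx; apply: HS; lia.
Qed.

End Coupling.


Section Pr.
Context {d0 : measure_display} {T : measurableType d0} {R : realType}.
Variable P : probability T R.

Definition pr (X : set T) : R := fine (P X).

Lemma pr_ge0 X : 0 <= pr X.
Proof. by apply: fine_ge0; apply: measure_ge0. Qed.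

Lemma pr_mono {X Y} : measurable X -> measurable Y -> X `<=` Y -> pr X <= pr Y.
Proof.
move=> mX mY XY; apply: fine_le; rewrite ?inE ?fin_num_measure //.
by apply: le_measure; rewrite ?inE.
Qed.

Lemma pr_le1 X : measurable X -> pr X <= 1.
Proof.
move=> mX; have := @pr_mono X setT mX measurableT (@subsetT _ X).
by rewrite /pr probability_setT.
Qed.

Lemma pr_U {X Y} : measurable X -> measurable Y -> pr (X `|` Y) <= pr X + pr Y.
Proof.
move=> mX mY; rewrite -lee_fin EFinD /pr !fineK ?fin_num_measure //; last exact: measurableU.
exact: measureU2.
Qed.

Lemma pr_diff {X X' Z} : measurable X -> measurable X' -> measurable Z ->
  (forall w, ~ Z w -> (X w <-> X' w)) -> `|pr X - pr X'| <= pr Z.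
Proof.
move=> mX mX' mZ H.
have h1 : forall A B, measurable A -> measurable B -> (forall w, ~ Z w -> A w -> B w) ->
    pr A <= pr B + pr Z.
  move=> A B mA mB HAB; apply: le_trans (pr_U mB mZ).
  apply: pr_mono => //; first exact: measurableU.
  by move=> w Aw; have [Zw|nZw] := pselect (Z w); [right|left; apply: HAB].
rewrite ler_norml; apply/andP; split.
  have := h1 X' X mX' mX (fun w nZ => proj2 (H w nZ)); lra.
have := h1 X X' mX mX' (fun w nZ => proj1 (H w nZ)); lra.
Qed.

Lemma pr_indep {X Y} : measurable X -> measurable Y ->
  P (X `&` Y) = (P X * P Y)%E -> pr (X `&` Y) = pr X * pr Y.
Proof.
move=> mX mY H; rewrite /pr H fineM // fin_num_measure //.
Qed.

End Pr.

Lemma bern {R : realType} (x : R) (n : nat) : 0 <= x <= 1 -> 1 - n%:R * x <= (1 - x) ^+ n.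
Proof.
move=> /andP[x0 x1]; elim: n => [|n IH]; first by rewrite expr0 mul0r subr0.
rewrite exprS.
have h : (1 - n%:R * x) * (1 - x) <= (1 - x) * (1 - x) ^+ n.
  by rewrite mulrC ler_wpM2l // subr_ge0.
apply: le_trans h; rewrite -natr1.
have : 0 <= n%:R * x * x by apply: mulr_ge0 => //; apply: mulr_ge0.
nra.
Qed.

Lemma geom {R : realType} (p : R) (D N k c : nat) : 0 < p <= 1 -> (0 < D)%N ->
  (k <= N * D + c)%N ->
  let rho := 1 - p / (2 * D%:R) in
  0 < rho < 1 /\ (1 - p) ^+ N <= rho ^+ k / rho ^+ c.
Proof.
move=> /andP[p0 p1] D0 hk rho.
have D1 : 1 <= D%:R :> R by rewrite ler1n.
have x0 : 0 < p / (2 * D%:R) by apply: divr_gt0 => //; lra.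
have x1 : p / (2 * D%:R) <= 1 / 2.
  rewrite ler_pdivrMr; last lra.
  have : p <= D%:R by lra.
  lra.
have r0 : 0 < rho by rewrite /rho; lra.
have r1 : rho < 1 by rewrite /rho; lra.
split; first by rewrite r0 r1.
have hb : 1 - p <= rho ^+ D.
  have := @bern R (p / (2 * D%:R)) D.
  rewrite (_ : D%:R * (p / (2 * D%:R)) = p / 2); last first.
    by field; rewrite pnatr_eq0 -lt0n.
  move=> /(_ _) H; apply: le_trans (H _); [lra| apply/andP; split; lra].
have h1 : (1 - p) ^+ N <= rho ^+ (N * D).
  rewrite mulnC exprM; apply: lerXn2r => //; rewrite ?nnegrE; [lra|].
  by apply: exprn_ge0; lra.
apply: (le_trans h1).
rewrite ler_pdivlMr; last by apply: exprn_gt0.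
rewrite -exprD; apply: ler_wiXn2l => //; lra.
Qed.


Section Main.
Context {d0 : measure_display} {T : measurableType d0} {R : realType}.
Variable P : probability T R.
Variables (e : int -> T -> R) (f : R -> R).
Variables (q dd : nat) (r mu1 mu2 : R) (phi psi : 'I_q -> R).
Hypothesis me : forall n, measurable_fun setT (e n).
Hypothesis ind : mutually_independent P e.
Hypothesis dens : forall n, has_density P (e n) f.
Hypothesis fc : continuous f.
Hypothesis fpos : forall x, 0 < f x.
Hypothesis hd : (1 <= dd)%N.

Definition c0 := r - `|mu1| - `|mu2| - \sum_(i < q) `|phi i| - \sum_(i < q) `|psi i|.
Definition Rs (t : int) := t :: [seq t - (i.+1)%:Z | i <- iota 0 q].
Definition Ineg : set R := [set` `]-oo, c0]].
Definition Iunit : set R := [set` `[-1, 1]].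
Definition RA (t : int) (x : int) : set R := if x == t then Ineg else Iunit.
Definition Rt t := rect e (Rs t) (RA t).

Lemma Ineg_meas : measurable Ineg. Proof. exact: measurable_itv. Qed.
Lemma Iunit_meas : measurable Iunit. Proof. exact: measurable_itv. Qed.

Lemma RA_meas t x : measurable (RA t x).
Proof. by rewrite /RA; case: ifP => _; [apply: Ineg_meas|apply: Iunit_meas]. Qed.

Lemma sum_bound (ph : 'I_q -> R) t w : Rt t w ->
  \sum_(i < q) ph i * e (t - (i.+1)%:Z) w <= \sum_(i < q) `|ph i|.
Proof.
move=> H; apply: ler_sum => i _.
have : RA t (t - (i.+1)%:Z) (e (t - (i.+1)%:Z) w).
  apply: H; rewrite /Rs inE; apply/orP; right; apply/mapP; exists (val i) => //.
  by rewrite mem_iota /= add0n.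
rewrite /RA; case: eqP => [|_]; first lia.
rewrite /Iunit /= in_itv /= => /andP[h1 h2].
apply: le_trans (ler_norm _) _; rewrite normrM.
by apply: ler_piMr => //; rewrite ler_norml h1 h2.
Qed.

Lemma Rt_good t w : Rt t w -> Good e q r mu1 mu2 phi psi t w.
Proof.
move=> H.
have he : e t w <= c0.
  have : RA t t (e t w) by apply: H; rewrite /Rs inE eqxx.
  by rewrite /RA eqxx /Ineg /= in_itv /=.
have s1 := @sum_bound phi t w H; have s2 := @sum_bound psi t w H.
have a1 := ler_norm mu1; have a2 := ler_norm mu2.
have b1 : 0 <= \sum_(i < q) `|phi i| by apply: sumr_ge0.
have b2 : 0 <= \sum_(i < q) `|psi i| by apply: sumr_ge0.
have n1 := normr_ge0 mu1; have n2 := normr_ge0 mu2.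
move: he; rewrite /c0 => he.
rewrite /Good /lin; split; lra.
Qed.

Lemma Rt_Grect t (S : set int) : (forall x, t - q%:Z <= x <= t -> S x) -> Grect e S (Rt t).
Proof.
move=> HS; exists (Rs t), (RA t); split; last by split => //; apply: RA_meas.
move=> x; rewrite /Rs inE => /orP[/eqP->|/mapP[i]]; first by apply: HS; lia.
by rewrite mem_iota add0n => /andP[_ hi] ->; apply: HS; lia.
Qed.

Lemma Rs_uniq t : uniq (Rs t).
Proof.
rewrite /Rs /= map_inj_uniq ?iota_uniq ?andbT; last by move=> i j; lia.
by apply/mapP => -[i _]; lia.
Qed.

Definition pE := (P (e 0 @^-1` Ineg) * \prod_(i <- iota 0 q) P (e 0 @^-1` Iunit))%E.

Lemma dens_eq n m A : measurable A -> P (e n @^-1` A) = P (e m @^-1` A).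
Proof. by move=> mA; rewrite (dens n A mA) (dens m A mA). Qed.

Lemma PRt t : P (Rt t) = pE.
Proof.
rewrite /Rt rect_prod //; last 2 first.
- exact: Rs_uniq.
- exact: RA_meas.
rewrite /Rs big_cons /RA eqxx (dens_eq t 0 Ineg Ineg_meas); congr (_ * _)%E.
rewrite big_map; apply: eq_big_seq => i _.
case: eqP => [|_]; first lia.
exact: dens_eq Iunit Iunit_meas.
Qed.


Lemma J0_pos : (0 < P (e 0 @^-1` Ineg))%E.
Proof.
apply: (@lt_le_trans _ _ (P (e 0 @^-1` [set` `[c0 - 1, c0]]))).
  rewrite (dens 0 _ (measurable_itv _)); apply: int_pos => //; lra.
apply: le_measure; rewrite ?inE.
- by rewrite -[X in measurable X]setTI; apply: me => //; apply: measurable_itv.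
- by rewrite -[X in measurable X]setTI; apply: me => //; apply: Ineg_meas.
- by move=> w /=; rewrite /Ineg /= !in_itv /= => /andP[].
Qed.

Lemma J1_pos : (0 < P (e 0 @^-1` Iunit))%E.
Proof. by rewrite (dens 0 _ Iunit_meas); apply: int_pos => //; lra. Qed.

Lemma pE_pos : (0 < pE)%E.
Proof.
apply: mule_gt0; first exact: J0_pos.
apply: (big_ind (fun x => 0 < x)%E) => //; first by move=> x y; apply: mule_gt0.
by move=> i _; apply: J1_pos.
Qed.

Lemma Rt_meas t : measurable (Rt t).
Proof. by apply: rect_meas => //; apply: RA_meas. Qed.

Definition p := fine pE.

Lemma pE_E : pE = p%:E.
Proof. by rewrite /p fineK // -(PRt 0) fin_num_measure //; apply: Rt_meas. Qed.

Lemma p_pos : 0 < p.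
Proof. by rewrite -lte_fin -pE_E pE_pos. Qed.

Lemma p_le1 : p <= 1.
Proof. by rewrite -lee_fin -pE_E -(PRt 0); apply: probability_le1; apply: Rt_meas. Qed.

Definition D := (q.+1 * dd)%N.

Lemma D_ge : (q.+1 <= D)%N.
Proof. by rewrite /D leq_pmulr. Qed.

Fixpoint Xs (t0 : int) (N : nat) : set T :=
  if N is N'.+1 then Xs t0 N' `&` ~` Rt (t0 - (N' * D)%:Z) else setT.

Lemma Xs_sig t0 N : sigE e (fun x => t0 - (N * D)%:Z < x) (Xs t0 N).
Proof.
have hD := D_ge.
elim: N => [|N IH] /=; first exact: sigT.
apply: sigI.
  by apply: sig_mono IH => x /=; rewrite mulSn; lia.
apply: sigC; apply: sub_sigma_algebra; apply: Rt_Grect => x /=; rewrite mulSn; lia.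
Qed.

Lemma Xs_meas t0 N : measurable (Xs t0 N).
Proof. exact: sigE_meas (Xs_sig t0 N). Qed.

Lemma Xs_P t0 N : P (Xs t0 N) = ((1 - p) ^+ N)%:E.
Proof.
elim: N => [|N IH] /=; first by rewrite probability_setT expr0.
have hD := D_ge.
rewrite (@indep_sig _ _ _ P e me ind (fun x => t0 - (N * D)%:Z < x)
   (fun x => x <= t0 - (N * D)%:Z) (Xs t0 N) (~` Rt (t0 - (N * D)%:Z))); last 3 first.
- by move=> x /=; lia.
- exact: Xs_sig.
- by apply: sigC; apply: sub_sigma_algebra; apply: Rt_Grect => x /=; lia.
rewrite IH probability_setC; last exact: Rt_meas.
transitivity (((1 - p) ^+ N)%:E * (1 - pE))%E; first by congr (_ * (_ - _))%E; exact: PRt.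
by rewrite pE_E -EFinB -EFinM exprS mulrC.
Qed.

Lemma Xs_out t0 N w : ~ Xs t0 N w -> exists2 i, (i < N)%N & Rt (t0 - (i * D)%:Z) w.
Proof.
elim: N => [|N IH] /=; first by [].
move=> /not_andP[/IH [i iN Hi]|/contrapT H]; first by exists i => //; apply: ltnW.
by exists N.
Qed.


Variable y : int -> T -> R.
Hypothesis my : forall n, measurable_fun setT (y n).
Hypothesis eqy : forall n, {ae P, forall w, y n w = tma_rhs e dd r mu1 mu2 phi psi y n w}.

Lemma ymeas n c : measurable [set w | y n w <= c].
Proof.
have := my n measurableT _ (measurable_itv `]-oo, c]).
rewrite setTI (_ : y n @^-1` _ = [set w | y n w <= c]) //.
Qed.

Lemma null_set : exists Z : set T, [/\ measurable Z, P Z = 0%E &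
  forall w, ~ Z w -> forall n, y n w = tma_rhs e dd r mu1 mu2 phi psi y n w].
Proof.
have h1 := ae_foralln (fun n => eqy n%:Z).
have h2 := ae_foralln (fun n => eqy (- n%:Z)).
have hall : \forall w \ae P, forall n : int, y n w = tma_rhs e dd r mu1 mu2 phi psi y n w.
  apply: filterS2 h1 h2 => w H1 H2 [n|n]; first exact: H1.
  by rewrite NegzE; apply: H2.
case: hall => Z [mZ PZ HZ]; exists Z; split => // w nZ n.
by apply: contrapT => H; apply: nZ; apply: HZ => H'; apply: H; apply: H'.
Qed.

Lemma main_bound : exists rho : R, 0 < rho < 1 /\
    forall u v : R, exists C : R, exists K : nat, forall k : nat, (K <= k)%N ->
      `| fine (P ([set w | y 0 w <= u] `&` [set w | y k%:Z w <= v]))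
         - fine (P [set w | y 0 w <= u]) * fine (P [set w | y k%:Z w <= v]) |
      <= C * rho ^+ k.
Proof.
have [Z [mZ PZ HZ]] := null_set.
have hD : (0 < D)%N by rewrite /D muln_gt0.
have hp : 0 < p <= 1 by rewrite p_pos p_le1.
pose c := (q + dd + D)%N.
pose rho := 1 - p / (2 * D%:R).
have [hrho _] := @geom R p D 0 0 0 hp hD (leq0n _).
exists rho; split => // u v.
exists (4 / rho ^+ c), (q + dd + 1)%N => k hk.
pose N := ((k - (q + dd + 1)) %/ D)%N.
pose L := (N * q.+1)%N.
have hND : (N * D <= k - (q + dd + 1))%N by apply: leq_trunc_div.
have hkN : (k <= N * D + c)%N.
  have := ltn_ceil (k - (q + dd + 1)) hD.
  rewrite /c -/N; lia.
have hLd : (L.+1 * dd = dd + N * D)%N by rewrite /L /D mulSn mulnA.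
pose eps := (1 - p) ^+ N.
have [_ hgeo] := @geom R p D N k c hp hD hkN.
have happ t w : ~ (Z `|` Xs (t - dd%:Z) N) w -> yh e q dd r mu1 mu2 phi psi t L w = y t w.
  move=> H; have nZ : ~ Z w by move=> Zw; apply: H; left.
  have nX : ~ Xs (t - dd%:Z) N w by move=> Xw; apply: H; right.
  have [i iN Hi] := @Xs_out _ _ _ nX.
  apply: yh_eq; first exact: HZ.
  exists (i * q.+1)%N; first by rewrite /L leq_mul2r ltnW.
  by rewrite -mulnA -/D; apply: Rt_good.
have mB t : measurable (Z `|` Xs (t - dd%:Z) N) by apply: measurableU => //; apply: Xs_meas.
have hB t : pr P (Z `|` Xs (t - dd%:Z) N) <= eps.
  apply: le_trans (pr_U _ mZ (Xs_meas _ _)) _.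
  by rewrite /pr PZ Xs_P /= add0r.
set A := [set w | y 0 w <= u]; set B := [set w | y k%:Z w <= v].
pose A' := [set w | yh e q dd r mu1 mu2 phi psi 0 L w <= u].
pose B' := [set w | yh e q dd r mu1 mu2 phi psi k%:Z L w <= v].
have sA' : sigE e (fun x => x <= 0) A'.
  by apply: yh_sig => // x; rewrite hLd; lia.
have sB' : sigE e (fun x => 1 <= x) B'.
  by apply: yh_sig => // x; rewrite hLd; lia.
have mA' : measurable A' by exact: (@sigE_meas _ _ _ e me _ _ sA').
have mB' : measurable B' by exact: (@sigE_meas _ _ _ e me _ _ sB').
have mA : measurable A by apply: ymeas.
have mBB : measurable B by apply: ymeas.
have indAB : pr P (A' `&` B') = pr P A' * pr P B'.
  apply: pr_indep => //.
  by apply: (@indep_sig _ _ _ P e me ind (fun x => x <= 0) (fun x => 1 <= x)) => // x /=; lia.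
have dA : `|pr P A - pr P A'| <= eps.
  apply: le_trans (hB 0); apply: pr_diff => // w H.
  by rewrite /A /A' /= (happ 0 w H).
have dB : `|pr P B - pr P B'| <= eps.
  apply: le_trans (hB k%:Z); apply: pr_diff => // w H.
  by rewrite /B /B' /= (happ k%:Z w H).
have dAB : `|pr P (A `&` B) - pr P (A' `&` B')| <= eps + eps.
  apply: le_trans (le_trans (pr_U _ (mB 0) (mB k%:Z)) (lerD (hB 0) (hB k%:Z))).
  apply: pr_diff; [exact: measurableI|exact: measurableI|exact: measurableU|].
  move=> w H; have H0 : ~ (Z `|` Xs (0 - dd%:Z) N) w by move=> h; apply: H; left.
  have Hk : ~ (Z `|` Xs (k%:Z - dd%:Z) N) w by move=> h; apply: H; right.
  by rewrite /A /A' /B /B' /= (happ 0 w H0) (happ k%:Z w Hk).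
have a0 := pr_ge0 P A; have a1 := pr_le1 P A mA.
have b0 := pr_ge0 P B'; have b1 := pr_le1 P B' mB'.
have key : `|pr P (A `&` B) - pr P A * pr P B| <= 4 * eps.
  rewrite indAB in dAB.
  have -> : pr P (A `&` B) - pr P A * pr P B =
    (pr P (A `&` B) - pr P A' * pr P B') + (pr P A' - pr P A) * pr P B'
      + pr P A * (pr P B' - pr P B) by ring.
  apply: le_trans (ler_normD _ _) _; apply: le_trans (lerD (ler_normD _ _) (lexx _)) _.
  rewrite !normrM (ger0_norm b0) (ger0_norm a0).
  have e1 : `|pr P A' - pr P A| * pr P B' <= eps.
    by rewrite distrC; apply: le_trans (ler_piMr _ b1) _ => //.
  have e2 : pr P A * `|pr P B' - pr P B| <= eps.
    by rewrite distrC; apply: le_trans (ler_piMl _ a1) _ => //.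
  lra.
apply: (le_trans key).
have -> : 4 / rho ^+ c * rho ^+ k = 4 * (rho ^+ k / rho ^+ c) by rewrite mulrA [4 / _ * _]mulrAC.
by rewrite ler_pM2l //.
Qed.

End Main.

Theorem theorem3p2 (d0 : measure_display) (T : measurableType d0)
  (R : realType) (P : probability T R)
  (e : int -> T -> R) (f : R -> R)
  (q d : nat) (r mu1 mu2 : R) (phi psi : 'I_q -> R)
  (y : int -> T -> R) :
  (* {e_n} i.i.d. with a continuous, bounded, strictly positive density *)
  (forall n, measurable_fun setT (e n)) ->
  mutually_independent P e ->
  (forall n, has_density P (e n) f) ->
  continuous f -> (exists M : R, forall x, f x <= M) -> (forall x, 0 < f x) ->
  (1 <= q)%N -> (1 <= d)%N ->
  (* {y_n} is a strictly stationary solution of the TMA equation *)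
  (forall n, measurable_fun setT (y n)) ->
  (forall n, {ae P, forall w, y n w = tma_rhs e d r mu1 mu2 phi psi y n w}) ->
  strictly_stationary P y ->
  exists rho : R, 0 < rho < 1 /\
    forall u v : R, exists C : R, exists K : nat, forall k : nat, (K <= k)%N ->
      `| fine (P ([set w | y 0 w <= u] `&` [set w | y k%:Z w <= v]))
         - fine (P [set w | y 0 w <= u]) * fine (P [set w | y k%:Z w <= v]) |
      <= C * rho ^+ k.
Proof.
move=> me ind dens fc _ fpos _ hd my eqy _.
exact: (main_bound P e f q d r mu1 mu2 phi psi me ind dens fc fpos hd y my eqy).
Qed.
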